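(* The collection $\mathrm{Cov}(\mathrm{St}\mathbb{C}^n)$ of covering families makes the category $\mathrm{St}\mathbb{C}^n$ into a Verdier site.
   Context: $\mathrm{St}\mathbb{C}^n$ is the category whose objects are $n$-dimensional Stein manifolds that are biholomorphic to an open subset of $\mathbb{C}^n$ (the empty manifold is included as an initial object, so that ''empty pullbacks'' exist), and whose morphisms are holomorphic embeddings, i.e. holomorphic maps that are biholomorphisms onto their (open) image. A family $\{U_i \xrightarrow{f_i} U\}_{i\in I}$ of morphisms of $\mathrm{St}\mathbb{C}^n$ is a covering family if $\bigcup_{i\in I} f_i(U_i) = U$; $\mathrm{Cov}(\mathrm{St}\mathbb{C}^n)$ denotes the collection of all covering families. A site is a category $\mathscr{C}$ with a collection $\mathrm{Cov}(\mathscr{C})$ of families $\{U_i\to U\}_{i\in I}$ of morphisms such that: (i) for every isomorphism $f:U'\to U$, $\{f\}$ is in $\mathrm{Cov}(\mathscr{C})$; (ii) if $\{U_i\to U\}_{i\in I}\in\mathrm{Cov}(\mathscr{C})$ and for each $i$, $\{V_{i,j}\to U_i\}_{j\in J_i}\in \mathrm{Cov}(\mathscr{C})$, then $\{V_{i,j}\to U_i\to U\}_{i,j}\in\mathrm{Cov}(\mathscr{C})$; (iii) if $\{U_i\to U\}_{i\in I}\in\mathrm{Cov}(\mathscr{C})$ and $V\to U$ is any morphism, then the fibre products $U_i\times_U V$ exist in $\mathscr{C}$ and $\{U_i\times_U V\to V\}_{i\in I}\in\mathrm{Cov}(\mathscr{C})$. A morphism is basal if it belongs to some covering family; a Verdier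 site is a site such that additionally (iv) for every basal morphism $V\to U$, the diagonal $V\to V\times_U V$ is basal. *)

(* Defs.v *)
From HB Require Import structures.
From mathcomp Require Import all_boot all_order all_algebra.
From mathcomp Require Import complex.
From mathcomp Require Import all_classical all_reals all_analysis.
Import numFieldNormedType.Exports.
Set Implicit Arguments. Unset Strict Implicit. Unset Printing Implicit Defensive.
Import Order.TTheory GRing.Theory Num.Theory.
Local Open Scope ring_scope.
Local Open Scope classical_set_scope.

Section StCn.
Variables (R : realType) (n : nat).

Definition Cn : normedModType R[i] := 'rV[R[i]]_n.

(* holomorphic on A: complex (R[i]-linear) Frechet differentiable at every point of A *)
Definition holo_on (W : normedModType R[i]) (A : set Cn) (f : Cn -> W) : Prop :=
  forall x, A x -> differentiable f x.

Definition hol_hull (U K : set Cn) : set Cn :=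
  [set z | U z /\ forall f : Cn -> R[i]^o, holo_on U f ->
     forall c : R[i], (forall w, K w -> `|f w| <= c) -> `|f z| <= c].

(* Stein open subset of C^n: holomorphically convex and holomorphically separable
   (local coordinates being given by the coordinate functions) *)
Definition stein (U : set Cn) : Prop :=
  (forall K, compact K -> K `<=` U -> compact (hol_hull U K)) /\
  (forall x y, U x -> U y -> x <> y ->
     exists f : Cn -> R[i]^o, holo_on U f /\ f x <> f y).

(* objects of St C^n (up to the equivalence of categories: Stein open subsets of C^n,
   the empty set included) *)
Definition obj (U : set Cn) : Prop := open U /\ stein U.

Definition mor (U V : set Cn) (f : Cn -> Cn) : Prop :=
  [/\ obj U, obj V, holo_on U f, f @` U `<=` V &
     [/\ {in U &, injective f}, open (f @` U) &
         exists g : Cn -> Cn, holo_on (f @` U) g /\ (forall x, U x -> g (f x) = x)]].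

Definition meq (U : set Cn) (f g : Cn -> Cn) : Prop := forall x, U x -> f x = g x.

Definition is_iso (U' U : set Cn) (f : Cn -> Cn) : Prop :=
  mor U' U f /\ exists g, [/\ mor U U' g, meq U' (g \o f) id & meq U (f \o g) id].

Definition covering (I : Type) (Ui : I -> set Cn) (fi : I -> Cn -> Cn) (U : set Cn) : Prop :=
  [/\ obj U, (forall i, mor (Ui i) U (fi i)) & \bigcup_i (fi i @` Ui i) = U].

Definition pullback (A B C : set Cn) (f1 f2 : Cn -> Cn)
    (P : set Cn) (p1 p2 : Cn -> Cn) : Prop :=
  [/\ mor P A p1, mor P B p2, meq P (f1 \o p1) (f2 \o p2) &
    forall Q q1 q2, mor Q A q1 -> mor Q B q2 -> meq Q (f1 \o q1) (f2 \o q2) ->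
      exists h, [/\ mor Q P h, meq Q (p1 \o h) q1, meq Q (p2 \o h) q2 &
        forall h', mor Q P h' -> meq Q (p1 \o h') q1 -> meq Q (p2 \o h') q2 ->
          meq Q h h']].

Definition basal (V U : set Cn) (f : Cn -> Cn) : Prop :=
  exists (I : Type) (Ui : I -> set Cn) (fi : I -> Cn -> Cn),
    covering Ui fi U /\ exists i, Ui i = V /\ meq V (fi i) f.

Definition site_ax1 : Prop :=
  forall U' U f, is_iso U' U f -> covering (fun _ : unit => U') (fun _ => f) U.

Definition site_ax2 : Prop :=
  forall (I : Type) Ui fi U, covering Ui fi U ->
  forall (J : I -> Type) (V : forall i, J i -> set Cn) (g : forall i, J i -> Cn -> Cn),
    (forall i, covering (V i) (g i) (Ui i)) ->
    covering (fun k : {i : I & J i} => V (projT1 k) (projT2 k))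
             (fun k => fi (projT1 k) \o g (projT1 k) (projT2 k)) U.

Definition site_ax3 : Prop :=
  forall (I : Type) Ui fi U V v, covering Ui fi U -> mor V U v ->
    (forall i : I, exists P p1 p2, pullback (Ui i) V U (fi i) v P p1 p2) /\
    (forall (P : I -> set Cn) (p1 p2 : I -> Cn -> Cn),
       (forall i, pullback (Ui i) V U (fi i) v (P i) (p1 i) (p2 i)) ->
       covering P p2 V).

Definition verdier_ax4 : Prop :=
  forall V U f, basal V U f ->
  forall P p1 p2, pullback V V U f f P p1 p2 ->
  forall d, mor V P d -> meq V (p1 \o d) id -> meq V (p2 \o d) id -> basal V P d.

Definition verdier_site_StCn : Prop :=
  [/\ site_ax1, site_ax2, site_ax3 & verdier_ax4].

End StCn.

(* Main.v *)
Require Import Defs.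
From HB Require Import structures.
From mathcomp Require Import all_boot all_order all_algebra.
From mathcomp Require Import complex.
From mathcomp Require Import all_classical all_reals all_analysis.
Import numFieldNormedType.Exports.
Set Implicit Arguments. Unset Strict Implicit. Unset Printing Implicit Defensive.
Import Order.TTheory GRing.Theory Num.Theory.
Local Open Scope ring_scope.
Local Open Scope classical_set_scope.

Section Aux.
Variables (R : realType) (n : nat).
Local Notation C := (Cn R n).

Lemma hull_compact (A K D : set C) : compact D -> D `<=` A ->
  hol_hull A K `<=` D -> compact (hol_hull A K).
Proof.
move=> cD DA HD; apply: (subclosed_compact _ cD HD).
move=> z clz.
have Dz : D z.
  have cl : closed D by apply: compact_closed => //; exact: norm_hausdorff.
  by apply: cl; apply: (closure_subset HD).
split; first exact: DA.
move=> f hf c bnd.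
have Hb : forall w, hol_hull A K w -> `|f w| <= c by move=> w [_ Hw]; exact: Hw.
have [w0 [H0 _]] := clz setT filterT.
have creal : c \is Num.real.
  by apply: ger0_real; apply: le_trans (Hb _ H0).
rewrite real_leNgt ?normr_real //; apply/negP => ltcz.
have e0 : 0 < `|f z| - c by rewrite subr_gt0.
have ctn := differentiable_continuous (hf z (DA _ Dz)).
have /cvgrPdist_lt /(_ _ e0) nb := ctn.
have [w [Hw dw]] := clz _ nb.
have := lerB_dist (f z) (f w).
move=> h1; have h2 := le_lt_trans h1 dw.
rewrite ltrD2l ltrN2 in h2.
by have := lt_le_trans h2 (Hb _ Hw); rewrite ltxx.
Qed.

Lemma hull_map (A B K : set C) (phi : C -> C) : holo_on A phi ->
  (forall x, A x -> B (phi x)) ->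
  forall z, hol_hull A K z -> hol_hull B (phi @` K) (phi z).
Proof.
move=> hphi AB z [Az Hz]; split; first exact: AB.
move=> f hf c bnd; apply: (Hz (f \o phi)).
- move=> x Ax; apply: differentiable_comp; [exact: hphi | exact: hf (AB _ Ax)].
- by move=> w Kw; apply: bnd; exists w.
Qed.

Lemma stein_transport (A B : set C) (phi psi : C -> C) :
  holo_on A phi -> holo_on B psi -> (forall x, A x -> B (phi x)) ->
  (forall y, B y -> A (psi y)) -> (forall x, A x -> psi (phi x) = x) ->
  stein B -> stein A.
Proof.
move=> hphi hpsi AB BA pp [hc hs]; split.
- move=> K cK KA.
  have cK' : compact (phi @` K).
    apply: continuous_compact => //; apply: continuous_in_subspaceT => x /set_mem Kx.
    exact: differentiable_continuous (hphi _ (KA _ Kx)).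
  have KB : phi @` K `<=` B by move=> _ [x Kx <-]; exact/AB/KA.
  have cH := hc _ cK' KB.
  have HB : hol_hull B (phi @` K) `<=` B by move=> y [].
  apply: (@hull_compact _ _ (psi @` hol_hull B (phi @` K))).
  + apply: continuous_compact => //; apply: continuous_in_subspaceT => y /set_mem Hy.
    exact: differentiable_continuous (hpsi _ (HB _ Hy)).
  + by move=> _ [y Hy <-]; exact/BA/HB.
  + move=> z Hz; exists (phi z); first exact: (hull_map hphi AB Hz).
    by apply: pp; case: Hz.
- move=> x y Ax Ay xy.
  have : phi x <> phi y by move=> e; apply: xy; rewrite -(pp x Ax) -(pp y Ay) e.
  move=> /(hs _ _ (AB _ Ax) (AB _ Ay)) [f [hf fxy]].
  exists (f \o phi); split => //.
  move=> z Az; apply: differentiable_comp; [exact: hphi | exact: hf (AB _ Az)].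
Qed.

Lemma stein_inter (U V : set C) : stein U -> stein V -> stein (U `&` V).
Proof.
move=> [hU sU] [hV sV]; split.
- move=> K cK KUV.
  have cHU := hU K cK (fun x h => (KUV x h).1).
  have cHV := hV K cK (fun x h => (KUV x h).2).
  have hs : hausdorff_space C by exact: norm_hausdorff.
  apply: (@hull_compact _ _ (hol_hull U K `&` hol_hull V K)).
  + apply: (subclosed_compact _ cHU (@subIsetl _ _ _)).
    by apply: closedI; apply: compact_closed.
  + by move=> z [[Uz _] [Vz _]].
  + move=> z [[Uz Vz] Hz]; split; split=> // f hf c b; apply: Hz => // x [Ux Vx].
    * exact: hf.
    * exact: hf.
- move=> x y [Ux _] [Uy _] xy; have [f [hf fxy]] := sU x y Ux Uy xy.
  by exists f; split => // z [Uz _]; exact: hf.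
Qed.

Lemma open_pre (A W : set C) (f : C -> C) : open A -> open W ->
  (forall x, A x -> {for x, continuous f}) -> open (A `&` f @^-1` W).
Proof.
move=> oA oW ctn; rewrite openE => x [Ax Wfx]; rewrite /interior /=.
apply: filterI. exact: (@open_nbhs_nbhs _ x A (conj oA Ax)). apply: (ctn x Ax). exact: (@open_nbhs_nbhs _ (f x) W (conj oW Wfx)).
Qed.

Lemma holo_id (A : set C) : holo_on A (@id C).
Proof. by move=> x _; exact: ex_diff. Qed.

Lemma holo_comp (A B : set C) (f g : C -> C) : holo_on A g -> holo_on B f ->
  (forall x, A x -> B (g x)) -> holo_on A (f \o g).
Proof.
move=> hg hf AB x Ax; apply: differentiable_comp; [exact: hg | exact: hf (AB _ Ax)].
Qed.

Lemma mor_invP (A B : set C) f : mor A B f ->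
  exists g, [/\ holo_on (f @` A) g, (forall x, A x -> g (f x) = x),
    (forall y, (f @` A) y -> A (g y)) & (forall y, (f @` A) y -> f (g y) = y)].
Proof.
move=> [_ _ _ _ [_ _ [g [hg gf]]]]; exists g; split => //.
- by move=> _ [x Ax <-]; rewrite gf.
- by move=> _ [x Ax <-]; rewrite gf.
Qed.

Lemma obj_image (A B : set C) f : mor A B f -> obj (f @` A).
Proof.
move=> m; have [oA oB hf fAB [inj ofA _]] := m.
have [g [hg gf gA fg]] := mor_invP m.
split => //; apply: (stein_transport hg hf gA); [by move=> x Ax; exists x | exact: fg | exact: oA.2].
Qed.

Lemma mor_inv (A B : set C) f : mor A B f ->
  exists g, [/\ mor (f @` A) A g, (forall x, A x -> g (f x) = x)
    & (forall y, (f @` A) y -> f (g y) = y)].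
Proof.
move=> m; have [oA oB hf fAB [inj ofA _]] := m.
have [g [hg gf gA fg]] := mor_invP m.
have gfA : g @` (f @` A) = A.
  apply/seteqP; split; first by move=> _ [y fy <-]; exact: gA.
  by move=> x Ax; exists (f x); [exists x | exact: gf].
exists g; split => //; split => //.
- exact: obj_image m.
- by rewrite gfA.
- split.
  + move=> y1 y2 /set_mem h1 /set_mem h2 e.
    by rewrite -(fg _ h1) -(fg _ h2) e.
  + by rewrite gfA; exact: oA.1.
  + exists f; split; first by rewrite gfA.
    by move=> y fy; exact: fg.
Qed.

Lemma mor_id (A : set C) : obj A -> mor A A id.
Proof.
move=> oA; split => //.
- by move=> _ [x Ax <-].
- split; [by move=> x y | by rewrite image_id; exact: oA.1 | by exists id; split].
Qed.

Lemma mor_restr (A B A' : set C) f : mor A B f -> obj A' -> A' `<=` A ->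
  mor A' B f.
Proof.
move=> m oA' sA; have [oA oB hf fAB [inj ofA [g [hg gf]]]] := m.
have [g' [hg' gf' gA fg]] := mor_invP m.
have e : f @` A' = f @` A `&` g' @^-1` A'.
  apply/seteqP; split.
  - by move=> _ [x Ax <-]; split; [exists x => //; exact: sA | rewrite /= gf' //; exact: sA].
  - by move=> y [fy Ag]; exists (g' y) => //; exact: fg.
split => //.
- by move=> x Ax; apply: hf; exact: sA.
- by move=> _ [x Ax <-]; apply: fAB; exists x => //; exact: sA.
- split.
  + move=> x y /set_mem xA /set_mem yA; apply: inj; apply/mem_set; exact: sA.
  + rewrite e; apply: open_pre => //; first exact: oA'.1.
    by move=> y fy; exact: differentiable_continuous (hg' _ fy).
  + exists g'; split.
    * by move=> y fy; apply: hg'; rewrite e in fy; exact: fy.1.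
    * by move=> x Ax; apply: gf'; exact: sA.
Qed.

Lemma mor_corestr (A B B' : set C) f : mor A B f -> obj B' -> f @` A `<=` B' ->
  mor A B' f.
Proof. by move=> [oA oB hf fAB rest] oB' sB; split. Qed.

Lemma mor_comp (A B D : set C) g f : mor A B g -> mor B D f -> mor A D (f \o g).
Proof.
move=> mg mf.
have [oA oB hg gAB [injg ogA _]] := mg.
have [_ oD hf fBD [injf ofB _]] := mf.
have mf' : mor (g @` A) D f by apply: (mor_restr mf (obj_image mg)).
have [_ _ _ _ [_ ofgA _]] := mf'.
have [hg' [hhg gg' _ _]] := mor_invP mg.
have [hf' [hhf ff' _ _]] := mor_invP mf.
have ie : (f \o g) @` A = f @` (g @` A) by rewrite image_comp.
split => //.
- by apply: (holo_comp hg hf) => x Ax; apply: gAB; exists x.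
- by move=> _ [x Ax <-]; apply: fBD; exists (g x) => //; apply: gAB; exists x.
- split.
  + move=> x y xA yA /= e; apply: injg => //; apply: injf => //; apply/mem_set;
      apply: gAB; [exists x => //; exact/set_mem | exists y => //; exact/set_mem].
  + by rewrite ie.
  + exists (hg' \o hf'); split.
    * apply: (holo_comp (B := g @` A)).
      - by move=> _ [x Ax <-]; apply: hhf; exists (g x) => //; apply: gAB; exists x.
      - exact: hhg.
      - move=> _ [x Ax <-]; rewrite /= ff'; first by exists x.
        by apply: gAB; exists x.
    * move=> x Ax /=; rewrite ff' ?gg' //; apply: gAB; exists x => //.
Qed.

Lemma mor_sub (A B : set C) f : mor A B f -> f @` A `<=` B.
Proof. by case. Qed.

Lemma mor_obj1 (A B : set C) f : mor A B f -> obj A.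
Proof. by case. Qed.

Lemma mor_obj2 (A B : set C) f : mor A B f -> obj B.
Proof. by case. Qed.

Lemma mor_inj (A B : set C) f : mor A B f -> forall x y, A x -> A y -> f x = f y -> x = y.
Proof. by move=> [_ _ _ _ [inj _ _]] x y Ax Ay; apply: inj; apply/mem_set. Qed.

Lemma canon_pb (A B D : set C) f v : mor A D f -> mor B D v ->
  exists P p1, pullback A B D f v P p1 id /\ P = B `&` v @^-1` (f @` A).
Proof.
move=> mf mv.
have [oA oD hf fAD [injf ofA _]] := mf.
have [oB _ hv vBD [injv ovB _]] := mv.
have [hfi [mh hf1 hf2]] := mor_inv mf.
have [hvi [mhv hv1 hv2]] := mor_inv mv.
have [_ _ hhv hvB _] := mhv.
set W := f @` A.
set P := B `&` v @^-1` W.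
have oP : obj P.
  split.
    apply: open_pre => //; first exact: oB.1.
    by move=> x Bx; exact: differentiable_continuous (hv _ Bx).
  apply: (@stein_transport _ (v @` B `&` W) v hvi).
  - by move=> x [Bx _]; exact: hv.
  - by move=> y [vy _]; exact: hhv.
  - by move=> x [Bx Wx]; split => //; exists x.
  - move=> y [vy Wy]; split; first by apply: hvB; exists y.
    by rewrite /= hv2.
  - by move=> x [Bx _]; exact: hv1.
  - exact: stein_inter (obj_image mv).2 (obj_image mf).2.
have PB : P `<=` B by move=> x [].
have mid : mor P B id := mor_restr (mor_id oB) oP PB.
have mvW : mor P W v.
  apply: (mor_corestr (mor_restr mv oP PB) (obj_image mf)).
  by move=> _ [x [_ Wx] <-].
have mp1 : mor P A (hfi \o v) := mor_comp mvW mh.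
exists P, (hfi \o v); split => //; split => //.
- by move=> x [Bx Wx] /=; rewrite hf2.
- move=> Q q1 q2 mq1 mq2 e.
  have sq1 := mor_sub mq1; have sq2 := mor_sub mq2.
  have mQP : mor Q P q2.
    apply: (mor_corestr mq2 oP) => _ [x Qx <-]; split; first by apply: sq2; exists x.
    by exists (q1 x); [apply: sq1; exists x | exact: (e x Qx)].
  exists q2; split => //.
  + move=> x Qx /=; have /= <- := e x Qx; rewrite hf1 //; apply: sq1; exists x => //.
  + by move=> h' _ _ e' x Qx; rewrite -(e' x Qx).
Qed.

Lemma ax1 : site_ax1 R n.
Proof.
move=> U' U f [m [g [mg _ fg]]]; split => //; first exact: mor_obj2 m.
apply/seteqP; split; first by move=> y [_ _ Hy]; exact: (mor_sub m).
move=> y Uy; exists tt => //; exists (g y); first by apply: (mor_sub mg); exists y.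
exact: fg.
Qed.

Lemma ax2 : site_ax2 R n.
Proof.
move=> I Ui fi U [oU mfi cov] J V g hV; split => //.
- by move=> [i j] /=; apply: mor_comp (mfi i); case: (hV i).
- apply/seteqP; split.
  + move=> y [[i j] _ Hy]; apply: (mor_sub (mor_comp _ (mfi i))) Hy.
    by case: (hV i).
  + move=> y; rewrite -{1}cov => -[i _ [u Uu <-]].
    have [_ _ covi] := hV i.
    rewrite -covi in Uu; case: Uu => j _ [w Vw <-].
    by exists (existT _ i j) => //; exists w.
Qed.

Lemma ax3 : site_ax3 R n.
Proof.
move=> I Ui fi U V v [oU mfi cov] mv; split.
- move=> i; have [P [p1 [pb _]]] := canon_pb (mfi i) mv.
  by exists P, p1, id.
- move=> P p1 p2 pb; split; first exact: mor_obj1 mv.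
  + by move=> i; case: (pb i).
  + apply/seteqP; split.
      by move=> y [i _ Hy]; case: (pb i) => _ m _ _; exact: (mor_sub m).
    move=> x Vx.
    have : U (v x) by apply: (mor_sub mv); exists x.
    rewrite -cov => -[i _ Hi].
    have [P0 [q1 [[mq1 mq2 eq _] eP0]]] := canon_pb (mfi i) mv.
    have P0x : P0 x by rewrite eP0.
    have [_ _ _ univ] := pb i.
    have [h [mh _ e2 _]] := univ P0 q1 id mq1 mq2 eq.
    exists i => //; exists (h x); first by apply: (mor_sub mh); exists x.
    exact: e2.
Qed.

Lemma ax4 : verdier_ax4 R n.
Proof.
move=> V U f _ P p1 p2 [mp1 _ _ _] d md e1 _.
exists unit, (fun _ => V), (fun _ => d); split; last by exists tt.
split => //; first exact: mor_obj2 md.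
apply/seteqP; split; first by move=> y [_ _ Hy]; exact: (mor_sub md).
move=> z Pz; exists tt => //; exists (p1 z); first by apply: (mor_sub mp1); exists z.
apply: (mor_inj mp1) => //; first by apply: (mor_sub md); exists (p1 z) => //;
  apply: (mor_sub mp1); exists z.
by apply: e1; apply: (mor_sub mp1); exists z.
Qed.
End Aux.

Theorem lemma1p3 (R : realType) (n : nat) : verdier_site_StCn R n.
Proof. by split; [exact: ax1 | exact: ax2 | exact: ax3 | exact: ax4]. Qed.
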